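(* Let $K>0$, $K\neq 1$, and let \[ A_2=\begin{pmatrix} K & 1 & 1\\ 1 & 1 & 1\\ 1 & 1 & 1\end{pmatrix},\qquad A_3=\begin{pmatrix} 1 & 1 & 1\\ 1 & K & K\\ 1 & K & K\end{pmatrix}. \] Then $A_2$ and $A_3$ have the same Sinkhorn limit \[ S(A_2)=S(A_3)=\begin{pmatrix} a & b & b\\ b & c & c\\ b & c & c\end{pmatrix} \] with \[ a=\frac{2K+1-\sqrt{8K+1}}{2(K-1)},\qquad b=\frac{-3+\sqrt{8K+1}}{4(K-1)},\qquad c=\frac{4K-1-\sqrt{8K+1}}{8(K-1)}. \]
   Context: For a positive $n\times n$ matrix $A$, the Sinkhorn limit $S(A)$ is the unique doubly stochastic matrix of the form $XAY$ with $X,Y$ positive diagonal matrices; it is the limit of alternately row scaling (dividing each row by its row sum) and column scaling (dividing each column by its column sum) starting from $A$. For a positive symmetric matrix $A$ there is a unique positive diagonal $X$ with $S(A)=XAX$. Both matrices are of the block form with first $k=1$ row $(M,B,B)$ and last $\ell=2$ rows $(B,N,N)$ with $MN/B^2=K$; the Sinkhorn limit of such a matrix depends only on $MN/B^2$. *)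

(* Defs.v *)
From HB Require Import structures.
From mathcomp Require Import all_boot all_order all_algebra.
Set Implicit Arguments. Unset Strict Implicit. Unset Printing Implicit Defensive.
Import Order.TTheory GRing.Theory Num.Theory.
Local Open Scope ring_scope.

Definition doubly_stochastic (R : numDomainType) (n : nat) (S : 'M[R]_n) : Prop :=
  (forall i j, 0 <= S i j) /\
  (forall i, \sum_(j < n) S i j = 1) /\
  (forall j, \sum_(i < n) S i j = 1).

(* For a positive A this characterizes the
   Sinkhorn limit S(A) (the paper's definition: "the unique doubly stochastic
   matrix of the form XAY"). *)
Definition sinkhorn_form (R : numDomainType) (n : nat) (A S : 'M[R]_n) : Prop :=
  doubly_stochastic S /\
  exists x y : 'I_n -> R,
    (forall i, 0 < x i) /\ (forall j, 0 < y j) /\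
    (forall i j, S i j = x i * A i j * y j).

Definition A2 (R : ringType) (K : R) : 'M[R]_3 :=
  \matrix_(i < 3, j < 3) (if (i == 0 :> nat) && (j == 0 :> nat) then K else 1).

Definition A3 (R : ringType) (K : R) : 'M[R]_3 :=
  \matrix_(i < 3, j < 3) (if (i == 0 :> nat) || (j == 0 :> nat) then 1 else K).

Definition blockM (R : ringType) (a b c : R) : 'M[R]_3 :=
  \matrix_(i < 3, j < 3)
    (if (i == 0 :> nat) && (j == 0 :> nat) then a
     else if (i == 0 :> nat) || (j == 0 :> nat) then b else c).

Definition sk_a (R : rcfType) (K : R) : R :=
  (2 * K + 1 - Num.sqrt (8 * K + 1)) / (2 * (K - 1)).
Definition sk_b (R : rcfType) (K : R) : R :=
  (- 3 + Num.sqrt (8 * K + 1)) / (4 * (K - 1)).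
Definition sk_c (R : rcfType) (K : R) : R :=
  (4 * K - 1 - Num.sqrt (8 * K + 1)) / (8 * (K - 1)).

(* Main.v *)
Require Import Defs.
From HB Require Import structures.
From mathcomp Require Import all_boot all_order all_algebra.
From mathcomp Require Import ring lra.
Import Order.TTheory GRing.Theory Num.Theory.
Local Open Scope ring_scope.
Set Implicit Arguments.
Lemma vals (R : rcfType) (K s : R) : 0 < s -> s ^+ 2 = 8 * K + 1 -> K != 1 ->
  sk_a K = (s - 1) / (s + 3) /\ sk_b K = 2 / (s + 3) /\ sk_c K = (s + 1) / (2 * (s + 3)).
Proof.
move=> hs hs2 hK1.
rewrite /sk_a /sk_b /sk_c.
have -> : Num.sqrt (8 * K + 1) = s by rewrite -hs2 sqrtr_sqr gtr0_norm.
have hK : K = (s ^+ 2 - 1) / 8 by rewrite hs2; field.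
have h3 : s + 3 != 0 by rewrite gt_eqF // ltr_wpDr.
have hK1' : (s ^+ 2 - 1) / 8 - 1 != 0 by rewrite -hK subr_eq0.
have hs3 : s - 3 != 0.
  apply: contra hK1' => /eqP h; rewrite (_ : s = 3); last by apply/eqP; rewrite -subr_eq0 h.
  by apply/eqP; field.
have e : (s ^+ 2 - 1) / 8 - 1 = (s - 3) * (s + 3) / 8 by field.
rewrite hK e; split; [|split]; field; rewrite ?h3 ?hs3 //=.
Qed.
Lemma quad (R : rcfType) (K s B : R) : 0 < s -> s ^+ 2 = 8 * K + 1 ->
  0 < B -> 0 < 1 - 2 * B -> (1 - 2 * B) * ((1 - B) / 2) = K * B * B ->
  B = 2 / (s + 3).
Proof.
move=> hs hs2 hB hA e.
have f : ((s - 3) * B + 2) * ((s + 3) * B - 2) = 0.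
  have hK : K = (s ^+ 2 - 1) / 8 by rewrite hs2; field.
  rewrite hK in e. 
  have : (1 - 2 * B) * ((1 - B) / 2) - (s ^+ 2 - 1) / 8 * B * B = 0 by rewrite e subrr.
  move=> h; transitivity (-8 * ((1 - 2 * B) * ((1 - B) / 2) - (s ^+ 2 - 1) / 8 * B * B)).
    by field.
  by rewrite h mulr0.
have h3 : s + 3 != 0 by rewrite gt_eqF // ltr_wpDr.
move/eqP: f; rewrite mulf_eq0 => /orP [/eqP f|/eqP f].
  exfalso; nra.
apply: (mulIf h3); rewrite divfK //; lra.
Qed.
Definition i0 : 'I_3 := @Ordinal 3 0 isT.
Definition i1 : 'I_3 := @Ordinal 3 1 isT.
Definition i2 : 'I_3 := @Ordinal 3 2 isT.

Lemma sum3 (R : rcfType) (F : 'I_3 -> R) : \sum_(j < 3) F j = F i0 + F i1 + F i2.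
Proof.
rewrite !big_ord_recl big_ord0 addr0 addrA; congr (F _ + F _ + F _); exact: val_inj.
Qed.

Lemma ord3P (P : 'I_3 -> Prop) : P i0 -> P i1 -> P i2 -> forall i, P i.
Proof.
move=> h0 h1 h2 [[|[|[|//]]] Hi].
- by rewrite (_ : Ordinal Hi = i0) //; apply: val_inj.
- by rewrite (_ : Ordinal Hi = i1) //; apply: val_inj.
- by rewrite (_ : Ordinal Hi = i2) //; apply: val_inj.
Qed.

Lemma A2E (R : rcfType) (K : R) : A2 K = blockM K 1 1.
Proof. by apply/matrixP => i j; rewrite !mxE; case: eqP; case: eqP. Qed.
Lemma A3E (R : rcfType) (K : R) : A3 K = blockM 1 1 K.
Proof. by apply/matrixP => i j; rewrite !mxE; case: eqP; case: eqP. Qed.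

Lemma blk (R : rcfType) (K p q r : R) (S : 'M[R]_3) : 0 < K -> K != 1 ->
  0 < p -> 0 < q -> 0 < r -> p * r = K * q * q ->
  sinkhorn_form (blockM p q r) S <-> S = blockM (sk_a K) (sk_b K) (sk_c K).
Proof.
move=> hK0 hK1 hp hq hr hpr.
have [s [hs hs2]] : exists s : R, 0 < s /\ s ^+ 2 = 8 * K + 1.
  have h8 : 0 <= 8 * K + 1 by lra.
  exists (Num.sqrt (8 * K + 1)); rewrite sqr_sqrtr // sqrtr_gt0; split => //; lra.
have [ea [eb ec]] := @vals R K s hs hs2 hK1.
have h3 : s + 3 != 0 by rewrite gt_eqF // ltr_wpDr.
have hK : K = (s ^+ 2 - 1) / 8 by rewrite hs2; field.
have hr' : r = K * q * q / p by rewrite -hpr; field; rewrite gt_eqF.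
rewrite ea eb ec; split.
- move=> [[hnn [hrow hcol]] [x [y [hx [hy hS]]]]].
  suff [EA [EB1 [EB2 [EC [ex ey]]]]] : x i0 * p * y i0 = (s - 1) / (s + 3) /\
     x i0 * q * y i1 = 2 / (s + 3) /\ x i1 * q * y i0 = 2 / (s + 3) /\
     x i1 * r * y i1 = (s + 1) / (2 * (s + 3)) /\ x i1 = x i2 /\ y i1 = y i2.
    apply/matrixP; apply: ord3P; apply: ord3P; rewrite hS !mxE /= -?ex -?ey //.
  move: (hrow i0) (hrow i1) (hrow i2) (hcol i0) (hcol i1) (hcol i2).
  rewrite !sum3 !hS !mxE /=.
  have := hx i0; have := hx i1; have := hx i2; have := hy i0; have := hy i1; have := hy i2.
  move: (x i0) (x i1) (x i2) (y i0) (y i1) (y i2) => x0 x1 x2 y0 y1 y2.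
  move=> py2 py1 py0 px2 px1 px0 r0 r1 r2 c0 c1 c2.
  have hT : 0 < q * y0 + r * y1 + r * y2 by rewrite !addr_gt0 ?mulr_gt0.
  have ex : x1 = x2.
    apply: (mulIf (negbT (gt_eqF hT))); rewrite (_ : x1 * _ = 1); last by rewrite -r1; ring.
    by rewrite -r2; ring.
  have hT' : 0 < q * x0 + r * x1 + r * x2 by rewrite !addr_gt0 ?mulr_gt0.
  have ey : y1 = y2.
    apply: (mulIf (negbT (gt_eqF hT'))); rewrite (_ : y1 * _ = 1); last by rewrite -c1; ring.
    by rewrite -c2; ring.
  subst x2 y2.
  have EB : x1 * q * y0 = x0 * q * y1 by lra.
  have Hq : (1 - 2 * (x0 * q * y1)) * ((1 - x0 * q * y1) / 2) = K * (x0 * q * y1) * (x0 * q * y1).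
    rewrite (_ : 1 - 2 * (x0 * q * y1) = x0 * p * y0); last by lra.
    rewrite (_ : (1 - x0 * q * y1) / 2 = x1 * r * y1); last by lra.
    rewrite [in RHS](_ : K * (x0 * q * y1) * (x0 * q * y1) = K * (x0 * q * y1) * (x1 * q * y0)); last by rewrite EB.
    transitivity ((p * r) * (x0 * y0 * x1 * y1)); first by ring.
    by rewrite hpr; ring.
  have hB : x0 * q * y1 = 2 / (s + 3).
    apply: (@quad R K s _ hs hs2) Hq; first by rewrite !mulr_gt0.
    rewrite (_ : 1 - 2 * (x0 * q * y1) = x0 * p * y0); last by lra.
    by rewrite !mulr_gt0.
  have EA : x0 * p * y0 = (s - 1) / (s + 3).
    rewrite (_ : x0 * p * y0 = 1 - 2 * (x0 * q * y1)); last by lra.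
    by rewrite hB; field.
  have EC : x1 * r * y1 = (s + 1) / (2 * (s + 3)).
    rewrite (_ : x1 * r * y1 = (1 - x0 * q * y1) / 2); last by lra.
    by rewrite hB; field.
  by rewrite EA hB EB hB EC.
- move=> ->.
  have h1 : 0 < s + 3 by rewrite ltr_wpDr.
  have hs1 : 0 < s - 1.
    rewrite subr_gt0.
    have : 1 < s ^+ 2 by rewrite hs2; lra.
    by apply: contraLR; rewrite -!leNgt => hs1; rewrite expr2; nra.
  have ha : 0 < (s - 1) / (s + 3) by rewrite divr_gt0.
  have hb : 0 < 2 / (s + 3) by rewrite divr_gt0.
  have hc : 0 < (s + 1) / (2 * (s + 3)) by rewrite divr_gt0 ?mulr_gt0 // ?addr_gt0.
  split; first split.
  + apply: ord3P; apply: ord3P; rewrite mxE /=; exact: ltW.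
  + split; apply: ord3P; rewrite sum3 !mxE /=; field; rewrite ?h3 //=.
  + exists (fun i : 'I_3 => if (i == 0 :> nat) then ((s - 1) / (s + 3)) / p else (2 / (s + 3)) / q), (fun j : 'I_3 => if (j == 0 :> nat) then 1 else (2 / (s + 3)) * p / (((s - 1) / (s + 3)) * q)).
    split; [|split].
    * move=> i /=; case: ifP => _; rewrite divr_gt0 //.
    * move=> j /=; case: ifP => _; rewrite ?ltr01 // !(divr_gt0, mulr_gt0) //.
    * move=> i j; elim/ord3P: i; elim/ord3P: j; rewrite !mxE /=.
      all: have hp0 : p != 0 by rewrite gt_eqF.
      all: have hq0 : q != 0 by rewrite gt_eqF.
      all: have hs10 : s - 1 != 0 by rewrite gt_eqF.
      all: rewrite ?hr' ?hK; field.
      all: rewrite ?hp0 ?hq0 ?h3 ?hs10 //=.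
Qed.

Theorem mainTheorem8 (R : rcfType) (K : R) (hK0 : 0 < K) (hK1 : K != 1) :
  (forall S : 'M[R]_3, sinkhorn_form (A2 K) S <-> S = blockM (sk_a K) (sk_b K) (sk_c K)) /\
  (forall S : 'M[R]_3, sinkhorn_form (A3 K) S <-> S = blockM (sk_a K) (sk_b K) (sk_c K)).
Proof.
split=> S; [rewrite A2E | rewrite A3E]; apply: blk => //; rewrite ?ltr01 //; ring.
Qed.
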